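(* Let $n\ge 2$. For each $(a,b)\in\Omega_n$, the set $L^{(n)}_{(a,b)}:=L(\{1,\omega^a,j,\omega^bj\})$ is a reflection system for $\mathcal{D}_n$, and $$L^{(n)}_{(a,b)}=\{\omega^{ma}\}_{1\le m\le 2n/a}\cup\{\omega^{\ell b}j\}_{1\le \ell\le 2n/b}.$$ Every reflection system for $\mathcal{D}_n$ is equivalent to $L^{(n)}_{(a,b)}$ for some $(a,b)\in\Omega_n$. Moreover $|L^{(n)}_{(a,b)}|=\frac{2n}{a}+\frac{2n}{b}$, and these cardinalities are pairwise different for different $(a,b)\in\Omega_n$.
   Context: $\mathbb{H}$ is the real quaternion algebra with basis $1,i,j,k$. For $n\ge2$ let $\omega:=\cos(\pi/n)+i\sin(\pi/n)\in\mathbb{H}$ (a primitive $2n$-th root of unity) and $\mathcal{D}_n:=\langle\omega,j\rangle$, the dicyclic group of order $4n$. Let $\Omega_n:=\{(a,b): 1\le a\le b\le n,\ a\mid n,\ b\mid n,\ \gcd(a,b)=1\}$. For a group $K$ and $x,y\in K$ put $x\circ y:=xy^{-1}x$; for $X\subseteq K$, $L(X)$ is the smallest subset of $K$ containing $X$ and closed under $\circ$. A reflection system for a finite group $K$ is a subset $L\subseteq K$ generating $K$, closed under $\circ$, and containing $1$. Two reflection systems $L,L'$ for $K$ are equivalent if $L'=\phi(xL)$ or $L'=\phi(Lx)$ for some $x\in L$ and some automorphism $\phi$ of $K$. *)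

(* Defs.v *)
From HB Require Import structures.
From mathcomp Require Import all_boot all_order all_algebra.
From mathcomp Require Import all_classical all_reals all_analysis.
Set Implicit Arguments. Unset Strict Implicit. Unset Printing Implicit Defensive.
Import Order.TTheory GRing.Theory Num.Theory.
Local Open Scope ring_scope.

Section Quat.
Variable R : realType.

(* Real quaternions a + b i + c j + d k, stored as (((a, b), c), d). *)
Definition quat := (R * R * R * R)%type.

Definition qmk (a b c d : R) : quat := (a, b, c, d).

Definition qmul (p q : quat) : quat :=
  let: (a1, b1, c1, d1) := p in
  let: (a2, b2, c2, d2) := q in
  qmk (a1 * a2 - b1 * b2 - c1 * c2 - d1 * d2)
      (a1 * b2 + b1 * a2 + c1 * d2 - d1 * c2)
      (a1 * c2 - b1 * d2 + c1 * a2 + d1 * b2)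
      (a1 * d2 + b1 * c2 - c1 * b2 + d1 * a2).

Definition qone : quat := qmk 1 0 0 0.
Definition qi : quat := qmk 0 1 0 0.
Definition qj : quat := qmk 0 0 1 0.

(* inverse in H: conj(q) / |q|^2 (only used on nonzero quaternions) *)
Definition qinv (q : quat) : quat :=
  let: (a, b, c, d) := q in
  let N := a ^+ 2 + b ^+ 2 + c ^+ 2 + d ^+ 2 in
  qmk (a / N) (- b / N) (- c / N) (- d / N).

Definition qexp (q : quat) (m : nat) : quat := iter m (qmul q) qone.

Definition omega (n : nat) : quat :=
  qmk (cos (pi / n%:R)) (sin (pi / n%:R)) 0 0.

Inductive gen (X : set quat) : set quat :=
  | gen_base x : X x -> gen X x
  | gen_one : gen X qone
  | gen_mul x y : gen X x -> gen X y -> gen X (qmul x y)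
  | gen_inv x : gen X x -> gen X (qinv x).

Definition Dic (n : nat) : set quat := gen (fun q => q = omega n \/ q = qj).

Definition qcirc (x y : quat) : quat := qmul (qmul x (qinv y)) x.

Inductive Lclos (X : set quat) : set quat :=
  | Lclos_base x : X x -> Lclos X x
  | Lclos_circ x y : Lclos X x -> Lclos X y -> Lclos X (qcirc x y).

Definition reflection_system (K L : set quat) : Prop :=
  [/\ (forall x, L x -> K x),
      (forall x, gen L x <-> K x),
      (forall x y, L x -> L y -> L (qcirc x y)) &
      L qone].

(* automorphism of the group K (a function on quaternions, relevant on K) *)
Definition is_aut (K : set quat) (phi : quat -> quat) : Prop :=
  [/\ (forall x, K x -> K (phi x)),
      (forall x y, K x -> K y -> phi x = phi y -> x = y),
      (forall z, K z -> exists2 x, K x & phi x = z) &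
      (forall x y, K x -> K y -> phi (qmul x y) = qmul (phi x) (phi y))].

Definition rs_equiv (K L L' : set quat) : Prop :=
  exists x phi, [/\ L x, is_aut K phi &
    (forall q, L' q <-> exists2 y, L y & q = phi (qmul x y)) \/
    (forall q, L' q <-> exists2 y, L y & q = phi (qmul y x))].

Definition Lab (n a b : nat) : set quat :=
  Lclos (fun q => [\/ q = qone, q = qexp (omega n) a, q = qj |
                     q = qmul (qexp (omega n) b) qj]).

End Quat.

Definition Omega_n (n a b : nat) : bool :=
  [&& 0 < a, a <= b, b <= n, a %| n, b %| n & coprime a b]%N.

Arguments omega R n : clear implicits.
Arguments qj R : clear implicits.
Arguments qone R : clear implicits.
Arguments Dic R n : clear implicits.
Arguments Lab R n a b : clear implicits.

(* Main.v *)
Require Import Defs.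
From HB Require Import structures.
From mathcomp Require Import all_boot all_order all_algebra.
From mathcomp Require Import all_classical all_reals all_analysis.
From mathcomp Require Import ring lra zify.
Import Order.TTheory GRing.Theory Num.Theory.
Set Implicit Arguments. Unset Strict Implicit. Unset Printing Implicit Defensive.
Local Open Scope ring_scope.

Section Basic.
Variable R : realType.
Variable n : nat.
Hypothesis n_gt0 : (0 < n)%N.

Definition th (k : int) : R := k%:~R * (pi / n%:R).
Definition E (k : int) (e : bool) : quat R :=
  if e then qmk 0 0 (cos (th k)) (sin (th k)) else qmk (cos (th k)) (sin (th k)) 0 0.

Lemma thD k l : th (k + l) = th k + th l.
Proof. by rewrite /th intrD mulrDl. Qed.
Lemma thN k : th (- k) = - th k.
Proof. by rewrite /th intrN mulNr. Qed.
Lemma thn : th n = pi.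
Proof.
rewrite /th pmulrn mulrCA divff ?mulr1 //.
by rewrite pnatr_eq0 -lt0n.
Qed.

Lemma mulE00 k l : qmul (E k false) (E l false) = E (k + l) false.
Proof.
rewrite /E /qmul /qmk thD cosD sinD; congr (_,_,_,_); ring.
Qed.
Lemma mulE01 k l : qmul (E k false) (E l true) = E (k + l) true.
Proof.
rewrite /E /qmul /qmk thD cosD sinD; congr (_,_,_,_); ring.
Qed.
Lemma mulE10 k l : qmul (E k true) (E l false) = E (k - l) true.
Proof.
rewrite /E /qmul /qmk thD thN cosD sinD cosN sinN; congr (_,_,_,_); ring.
Qed.
Lemma mulE11 k l : qmul (E k true) (E l true) = E (k - l + n) false.
Proof.
rewrite /E /qmul /qmk thD thn cosDpi sinDpi thD thN cosD sinD cosN sinN; congr (_,_,_,_); ring.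
Qed.

Lemma invE0 k : qinv (E k false) = E (- k) false.
Proof.
rewrite /E /qinv /qmk thN cosN sinN.
have -> : cos (th k) ^+ 2 + sin (th k) ^+ 2 + 0 ^+ 2 + 0 ^+ 2 = 1.
  by rewrite expr0n /= !addr0 cos2Dsin2.
by rewrite !divr1 ?oppr0 ?mul0r ?mulNr.
Qed.
Lemma invE1 k : qinv (E k true) = E (k + n) true.
Proof.
rewrite /E /qinv /qmk thD thn cosDpi sinDpi.
have -> : 0 ^+ 2 + 0 ^+ 2 + cos (th k) ^+ 2 + sin (th k) ^+ 2 = 1 :> R.
  by rewrite expr0n /= !add0r cos2Dsin2.
by rewrite !divr1 ?oppr0 ?mul0r ?mulNr.
Qed.

Lemma E0 : E 0 false = qone R.
Proof. by rewrite /E /th mul0r cos0 sin0. Qed.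
Lemma E0j : E 0 true = qj R.
Proof. by rewrite /E /th mul0r cos0 sin0. Qed.
Lemma E1 : E 1 false = omega R n.
Proof. by rewrite /E /th mul1r. Qed.

Lemma qexpE m : qexp (omega R n) m = E m false.
Proof.
elim: m => [|m IH]; first by rewrite E0.
by rewrite /qexp iterS -/(qexp _ _) IH -E1 mulE00 -addn1 PoszD addrC.
Qed.

Lemma Ej k : qmul (E k false) (qj R) = E k true.
Proof. by rewrite -E0j mulE01 addr0. Qed.


Lemma cos_perN (x : R) m : cos (x + (pi *+ 2) *+ m) = cos x.
Proof. elim: m => [|m IH]; first by rewrite mulr0n addr0. by rewrite mulrSr addrA cosD2pi. Qed.
Lemma sin_perN (x : R) m : sin (x + (pi *+ 2) *+ m) = sin x.
Proof. elim: m => [|m IH]; first by rewrite mulr0n addr0. by rewrite mulrSr addrA sinD2pi. Qed.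

Lemma cos_per (x : R) (t : int) : cos (x + t%:~R * (pi *+ 2)) = cos x.
Proof.
case: t => m; first by rewrite mulr_natl cos_perN.
rewrite NegzE intrN mulNr mulr_natl.
by rewrite -{2}(subrK ((pi *+ 2) *+ m.+1) x) cos_perN.
Qed.
Lemma sin_per (x : R) (t : int) : sin (x + t%:~R * (pi *+ 2)) = sin x.
Proof.
case: t => m; first by rewrite mulr_natl sin_perN.
rewrite NegzE intrN mulNr mulr_natl.
by rewrite -{2}(subrK ((pi *+ 2) *+ m.+1) x) sin_perN.
Qed.

Lemma th2n t : th ((2 * n)%N%:Z * t) = t%:~R * (pi *+ 2).
Proof.
have n0 : n%:R != 0 :> R by rewrite pnatr_eq0 -lt0n.
rewrite /th intrM -!pmulrn natrM mulr2n; field.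
exact: n0.
Qed.

Lemma E_per k t e : E (k + (2 * n)%N%:Z * t) e = E k e.
Proof. by rewrite /E thD th2n cos_per sin_per. Qed.

Lemma E_eqmod k l e : (((2 * n)%N%:Z) %| k - l)%Z -> E k e = E l e.
Proof.
move/dvdzP => [t ht].
have -> : k = l + (2 * n)%N%:Z * t by rewrite mulrC -ht addrC subrK.
by rewrite E_per.
Qed.

Lemma cos_th1 m : cos (th m) = 1 -> (((2 * n)%N%:Z) %| m)%Z.
Proof.
move=> h.
have n2 : (0 < (2 * n)%N)%N by rewrite muln_gt0 n_gt0.
have hm := divz_eq m (2 * n)%N%:Z.
set q := (m %/ _)%Z in hm; set r := (m %% _)%Z in hm.
have r0 : (0 <= r)%R by rewrite /r modz_ge0 // -lt0n.
have r2 : (r < (2 * n)%N%:Z)%R by rewrite /r ltz_pmod.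
have hmod : (m %% (2 * n)%N%:Z)%Z = r by [].
clearbody q r.
have hr : cos (th r) = 1.
  by rewrite -h hm (addrC (q * _)) (mulrC q) thD th2n cos_per.
apply/dvdz_mod0P; rewrite hmod.
case: r r0 r2 hr {hm} hmod => // r' _ r2 hr _.
case: r' r2 hr => // r' r2 hr; exfalso.
set x := th (r'.+1) / 2.
have hx : th r'.+1 = x *+ 2 by rewrite /x -mulr_natr divfK // pnatr_eq0.
have xpos : 0 < x < pi.
  have n0 : 0 < n%:R :> R by rewrite ltr0n.
  rewrite /x /th pmulrn; apply/andP; split.
    by rewrite divr_gt0 // mulr_gt0 // ?ltr0n // divr_gt0 // pi_gt0.
  rewrite ltr_pdivrMr // mulrA ltr_pdivrMr // (mulrC _ pi) -!mulrA ltr_pM2l ?pi_gt0 //.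
  rewrite -!pmulrn -natrM ltr_nat.
  move: r2; rewrite ltz_nat; lia.
have := sin_gt0_pi xpos.
move: hr; rewrite hx cos_mulr2n => hr.
have hc : cos x ^+ 2 = 1.
  by move: hr; rewrite mulr2n; lra.
have : sin x ^+ 2 = 0 by rewrite sin2cos2 hc subrr.
move/eqP; rewrite expf_eq0 /= => /eqP ->; by rewrite ltxx.
Qed.

Lemma E_inj k l e f : E k e = E l f -> e = f /\ (((2 * n)%N%:Z) %| k - l)%Z.
Proof.
have cs x : ~ (cos x = 0 /\ sin x = 0 :> R).
  move=> [c s]; have := cos2Dsin2 x; rewrite c s expr0n /= addr0 => /eqP.
  by rewrite eq_sym oner_eq0.
case: e; case: f; rewrite /E /qmk; [move=> [h1 h2]|move=> [h1 h2 h3 h4]|move=> [h1 h2 h3 h4]|move=> [h1 h2]].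
- split => //; apply: cos_th1.
  by rewrite thD thN cosD cosN sinN h1 h2 mulrN opprK cos2Dsin2.
- by exfalso; apply: (cs (th k)).
- by exfalso; apply: (cs (th l)).
- split => //; apply: cos_th1.
  by rewrite thD thN cosD cosN sinN h1 h2 mulrN opprK cos2Dsin2.
Qed.


Lemma circ00 p q : qcirc (E p false) (E q false) = E (p + p - q) false.
Proof. by rewrite /qcirc invE0 !mulE00; congr (E _ _); lia. Qed.
Lemma circ11 p q : qcirc (E p true) (E q true) = E (p + p - q) true.
Proof. by rewrite /qcirc invE1 mulE11 mulE01; congr (E _ _); lia. Qed.
Lemma circ01 p q : qcirc (E p false) (E q true) = E (q + n) true.
Proof. by rewrite /qcirc invE1 mulE01 mulE10; congr (E _ _); lia. Qed.
Lemma circ10 p q : qcirc (E p true) (E q false) = E (q + n) false.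
Proof. by rewrite /qcirc invE0 mulE10 mulE11; congr (E _ _); lia. Qed.

Lemma two_step (P : int -> Prop) (d : int) :
  P 0 -> P d -> (forall x y, P x -> P y -> P (x + x - y)) ->
  forall t : int, P (t * d).
Proof.
move=> P0 Pd Pc.
have Pn : forall m : nat, P (m%:Z * d) /\ P (m.+1%:Z * d).
  elim=> [|m [IH1 IH2]]; first by rewrite mul0r mul1r.
  split => //.
  have -> : m.+2%:Z * d = m.+1%:Z * d + m.+1%:Z * d - m%:Z * d.
    rewrite -!mulrDl -mulrBl; congr (_ * _); lia.
  exact: Pc.
case=> m; first exact: (Pn m).1.
have -> : Negz m * d = 0 + 0 - m.+1%:Z * d by rewrite NegzE; ring.
exact: Pc (Pn m).2.
Qed.

Lemma Dic_E x : Dic R n x <-> exists k e, x = E k e.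
Proof.
split.
  elim=> [y [->|->]| |y z _ [k [e ->]] _ [l [f ->]] | y _ [k [e ->]]].
  - by exists 1, false; rewrite E1.
  - by exists 0, true; rewrite E0j.
  - by exists 0, false; rewrite E0.
  - case: e; case: f; rewrite ?mulE00 ?mulE01 ?mulE10 ?mulE11; by eexists; eexists.
  - case: e; rewrite ?invE0 ?invE1; by eexists; eexists.
have Hnat : forall m : nat, Dic R n (E m false).
  elim=> [|m IH]; first by rewrite E0; apply: gen_one.
  have -> : E m.+1 false = qmul (E 1 false) (E m false) by rewrite mulE00; congr (E _ _); lia.
  by apply: gen_mul => //; apply: gen_base; left; rewrite E1.
have Hint : forall k : int, Dic R n (E k false).
  move=> k; have n2 : (2 * n)%N%:Z != 0 by rewrite -lt0n muln_gt0 n_gt0.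
  have -> : E k false = E `|(k %% (2 * n)%N%:Z)%Z|%N false.
    apply: E_eqmod; rewrite gez0_abs ?modz_ge0 //.
    by rewrite -eqz_mod_dvd modz_mod.
  exact: Hnat.
move=> [k [[] ->]]; last exact: Hint.
rewrite -Ej; apply: gen_mul; first exact: Hint.
by apply: gen_base; right.
Qed.


Definition S (a b : nat) (q : quat R) :=
  exists k e, q = E k e /\ (if e then (b%:Z %| k)%Z else (a%:Z %| k)%Z).

Lemma Lab_S a b q : (a %| n)%N -> (b %| n)%N -> Lab R n a b q <-> S a b q.
Proof.
move=> an bn; have an' : (a%:Z %| n%:Z)%Z by []. have bn' : (b%:Z %| n%:Z)%Z by [].
split.
  elim=> [y [->|->|->|->]| y z _ [k [e [-> hk]]] _ [l [f [-> hl]]]].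
  - by exists 0, false; rewrite E0 dvdz0.
  - by exists a, false; rewrite qexpE dvdzz.
  - by exists 0, true; rewrite E0j dvdz0.
  - by exists b, true; rewrite qexpE Ej dvdzz.
  - case: e hk; case: f hl => hl hk.
    + by rewrite circ11; eexists; exists true; split; [reflexivity|rewrite rpredB ?rpredD].
    + by rewrite circ10; eexists; exists false; split; [reflexivity|rewrite rpredD].
    + by rewrite circ01; eexists; exists true; split; [reflexivity|rewrite rpredD].
    + by rewrite circ00; eexists; exists false; split; [reflexivity|rewrite rpredB ?rpredD].
move=> [k [e [-> hk]]].
case: e hk => /dvdzP [t ->].
- apply: (two_step (P := fun x => Lab R n a b (E x true))).
  + by apply: Lclos_base; rewrite E0j; apply: Or43.
  + by apply: Lclos_base; rewrite -Ej -qexpE; apply: Or44.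
  + by move=> x y hx hy; rewrite -circ11; apply: Lclos_circ.
- apply: (two_step (P := fun x => Lab R n a b (E x false))).
  + by apply: Lclos_base; rewrite E0; apply: Or41.
  + by apply: Lclos_base; rewrite -qexpE; apply: Or42.
  + by move=> x y hx hy; rewrite -circ00; apply: Lclos_circ.
Qed.


Lemma gen_sub_Dic (L : set (quat R)) :
  (forall x, L x -> Dic R n x) -> forall x, gen L x -> Dic R n x.
Proof.
move=> hL x; elim=> [y /hL //| |y z _ hy _ hz|y _ hy].
- exact: gen_one.
- exact: gen_mul.
- exact: gen_inv.
Qed.

Lemma Lab_rs a b : (a %| n)%N -> (b %| n)%N -> coprime a b ->
  reflection_system (Dic R n) (Lab R n a b).
Proof.
move=> an bn cab.
have LD : forall x, Lab R n a b x -> Dic R n x.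
  move=> x /(Lab_S _ an bn) [k [e [-> _]]]; apply/Dic_E; by exists k, e.
split => //.
- move=> x; split; first exact: gen_sub_Dic.
  move=> /Dic_E [k [e ->]].
  have hF (t : int) : gen (Lab R n a b) (E (t * a%:Z) false).
    apply: gen_base; apply/(Lab_S _ an bn); exists (t * a), false; split => //.
    exact: dvdz_mull (dvdzz _).
  have hT (t : int) : gen (Lab R n a b) (E (t * b%:Z) true).
    apply: gen_base; apply/(Lab_S _ an bn); exists (t * b), true; split => //.
    exact: dvdz_mull (dvdzz _).
  have hT0 (t : int) : gen (Lab R n a b) (E (t * b%:Z) false).
    have -> : E (t * b%:Z) false = qmul (E (t * b%:Z) true) (qinv (E (0 * b%:Z) true)).
      by rewrite invE1 mulE11; congr (E _ _); lia.
    by apply: gen_mul; [|apply: gen_inv].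
  have [u [v huv]] := Bezoutz a b.
  have g1 : gcdz a b = 1 by rewrite /gcdz /=; move/eqP: cab => ->.
  rewrite g1 in huv.
  have hall l : gen (Lab R n a b) (E l false).
    have -> : E l false = qmul (E ((l * u) * a) false) (E ((l * v) * b) false).
      by rewrite mulE00 -!mulrA -mulrDr huv mulr1.
    by apply: gen_mul.
  case: e; last exact: hall.
  rewrite -Ej -E0j -(mul0r (b%:Z)); by apply: gen_mul.
- by move=> x y hx hy; apply: Lclos_circ.
- by apply: Lclos_base; apply: Or41.
Qed.


Lemma norm_rep (d : nat) (k : int) : (0 < d)%N -> (d %| n)%N -> (d%:Z %| k)%Z ->
  exists m : nat, [/\ (1 <= m)%N, (m <= (2 * n) %/ d)%N &
                     ((2 * n)%N%:Z %| k - (m * d)%N%:Z)%Z].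
Proof.
move=> d0 dn /dvdzP [t ->].
set D := ((2 * n) %/ d)%N.
have d2n : (d %| 2 * n)%N by rewrite dvdn_mull.
have hD : (D * d = 2 * n)%N by rewrite divnK.
have D0 : (0 < D)%N by rewrite divn_gt0 // (dvdn_leq _ d2n) // muln_gt0 n_gt0.
have Dz : D%:Z != 0 by rewrite -lt0n.
have [r hmod] : {r | (t %% D%:Z)%Z = r} by exists (t %% D%:Z)%Z.
have r0 : 0 <= r by rewrite -hmod modz_ge0.
have rD : r < D%:Z by rewrite -hmod ltz_pmod.
exists (if r == 0 then D else `|r|%N).
have hm : (t == (if r == 0 then D else `|r|%N)%:Z %[mod D%:Z])%Z.
  have [r00|rn0] := eqVneq r 0.
  - by rewrite modzz hmod r00.
  - by rewrite gez0_abs // (modz_small (m := r)) ?r0 ?rD // hmod.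
split.
- by have [r00|rn0] := eqVneq r 0 => //; lia.
- by have [r00|rn0] := eqVneq r 0 => //; lia.
- rewrite -hD !PoszM -mulrBl dvdz_mul //; first by rewrite -eqz_mod_dvd.
Qed.

Lemma small_dvd (x : int) : ((2 * n)%N%:Z %| x)%Z -> - (2 * n)%N%:Z < x < (2 * n)%N%:Z -> x = 0.
Proof. move=> /dvdzP [t ->] /andP []; have : (0 < (2 * n)%N%:Z) by rewrite ltz_nat muln_gt0 n_gt0. move: ((2 * n)%N%:Z) => N; clear; move=> N0 h1 h2. have [tp|tn|->] := ltgtP t 0; last by rewrite mul0r. - have t1 : t <= -1 by lia. have : (t + 1) * N <= 0 by apply: mulr_le0_ge0; lia. lia. - have t1 : 1 <= t by lia. have : 0 <= (t - 1) * N by apply: mulr_ge0; lia. lia. Qed.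

Lemma S_RHS a b q : (0 < a)%N -> (0 < b)%N -> (a %| n)%N -> (b %| n)%N ->
  S a b q <->
  (exists m : nat, [/\ (1 <= m)%N, (m <= (2 * n) %/ a)%N &
                       q = qexp (omega R n) (m * a)%N]) \/
  (exists l : nat, [/\ (1 <= l)%N, (l <= (2 * n) %/ b)%N &
                       q = qmul (qexp (omega R n) (l * b)%N) (qj R)]).
Proof.
move=> a0 b0 an bn; split.
  move=> [k [[] [-> hk]]].
  - have [m [m1 m2 hm]] := norm_rep b0 bn hk.
    right; exists m; split => //; rewrite qexpE Ej; exact: E_eqmod.
  - have [m [m1 m2 hm]] := norm_rep a0 an hk.
    left; exists m; split => //; rewrite qexpE; exact: E_eqmod.
move=> [[m [_ _ ->]]|[m [_ _ ->]]].
- exists (m * a)%N, false; rewrite qexpE; split => //.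
  by rewrite PoszM dvdz_mull // dvdzz.
- exists (m * b)%N, true; rewrite qexpE Ej; split => //.
  by rewrite PoszM dvdz_mull // dvdzz.
Qed.


Lemma inj_range (d m m' : nat) e : (0 < d)%N ->
  (1 <= m <= (2 * n) %/ d)%N -> (1 <= m' <= (2 * n) %/ d)%N ->
  E (m * d)%N e = E (m' * d)%N e -> m = m'.
Proof.
move=> d0 /andP [m1 m2] /andP [m1' m2'] /E_inj [_ h].
have b1 : (m * d <= 2 * n)%N by apply: leq_trans (leq_trunc_div (2 * n) d); rewrite leq_mul2r m2 orbT.
have b2 : (m' * d <= 2 * n)%N by apply: leq_trans (leq_trunc_div (2 * n) d); rewrite leq_mul2r m2' orbT.
have b3 : (1 <= m * d)%N by rewrite muln_gt0 m1.
have b4 : (1 <= m' * d)%N by rewrite muln_gt0 m1'.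
have := small_dvd h.
have -> : - (2 * n)%N%:Z < (m * d)%N%:Z - (m' * d)%N%:Z < (2 * n)%N%:Z by apply/andP; split; lia.
move=> /(_ isT) hx.
have : (m * d = m' * d)%N by lia.
by move/eqP; rewrite eqn_pmul2r // => /eqP.
Qed.

Definition sq (a b : nat) : seq (quat R) :=
  [seq qexp (omega R n) (m * a)%N | m <- iota 1 ((2 * n) %/ a)] ++
  [seq qmul (qexp (omega R n) (l * b)%N) (qj R) | l <- iota 1 ((2 * n) %/ b)].

Lemma sq_uniq a b : (0 < a)%N -> (0 < b)%N -> uniq (sq a b).
Proof.
move=> a0 b0; rewrite cat_uniq; apply/and3P; split.
- rewrite map_inj_in_uniq ?iota_uniq // => m m'; rewrite !mem_iota !qexpE => h1 h2 h.
  apply: (inj_range (d := a) (e := false)) => //; lia.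
- apply/hasPn => q /mapP [l _ ->]; apply/negP => /mapP [m _].
  by rewrite !qexpE Ej => /E_inj [].
- rewrite map_inj_in_uniq ?iota_uniq // => m m'; rewrite !mem_iota !qexpE !Ej => h1 h2 h.
  apply: (inj_range (d := b) (e := true)) => //; lia.
Qed.

Lemma sq_mem a b q :
  q \in sq a b <->
  (exists m : nat, [/\ (1 <= m)%N, (m <= (2 * n) %/ a)%N &
                       q = qexp (omega R n) (m * a)%N]) \/
  (exists l : nat, [/\ (1 <= l)%N, (l <= (2 * n) %/ b)%N &
                       q = qmul (qexp (omega R n) (l * b)%N) (qj R)]).
Proof.
rewrite mem_cat; split.
  move=> /orP [/mapP [m]|/mapP [m]]; rewrite mem_iota => hm ->.
  - by left; exists m; split => //; lia.
  - by right; exists m; split => //; lia.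
move=> [[m [h1 h2 ->]]|[m [h1 h2 ->]]]; apply/orP.
- by left; apply/mapP; exists m => //; rewrite mem_iota; lia.
- by right; apply/mapP; exists m => //; rewrite mem_iota; lia.
Qed.

Lemma sq_size a b : size (sq a b) = ((2 * n) %/ a + (2 * n) %/ b)%N.
Proof. by rewrite size_cat !size_map !size_iota. Qed.


Lemma structure (P : int -> Prop) : P 0 -> P n -> (forall x y, P x -> P y -> P (x + x - y)) ->
  exists d : nat, [/\ (0 < d)%N, (d %| n)%N & forall k, P k <-> (d%:Z %| k)%Z].
Proof.
move=> P0 Pn Pc.
have PN x : P x -> P (- x).
  by move=> h; rewrite (_ : - x = 0 + 0 - x); [exact: Pc | ring].
have P2n : P (2 * n)%N%:Z.
  by have := Pc _ _ Pn P0; have -> : (2 * n)%N%:Z = n%:Z + n%:Z - 0 by lia.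
have hex : exists m, (0 < m)%N && `[< P m%:Z >].
  by exists (2 * n)%N; apply/andP; split; [rewrite muln_gt0 n_gt0 | exact/asboolP].
case: (ex_minnP hex) => d /andP [d0 /asboolP Pd] dmin.
have Pmul t : P (t * d%:Z) := two_step P0 Pd Pc t.
have nosmall y : P y -> 0 < y < d%:Z -> False.
  case: y => // y' Py /andP [h1 h2].
  have : (d <= y')%N by apply: dmin; apply/andP; split; [lia | exact/asboolP].
  lia.
have dvd_of x : P x -> (d%:Z %| x)%Z.
  move=> Px.
  set D := d%:Z + d%:Z.
  have D0 : D != 0 by rewrite /D; lia.
  have hx := divz_eq x D.
  have [r hr] : {r | (x %% D)%Z = r} by exists (x %% D)%Z.
  have [q hq] : {q | (x %/ D)%Z = q} by exists (x %/ D)%Z.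
  have r0 : 0 <= r by rewrite -hr modz_ge0.
  have rD : r < D by rewrite -hr ltz_mod.
  rewrite hr hq in hx.
  have Pr : P r.
    have := Pc _ _ (Pmul q) Px => /PN.
    by have -> : - (q * d%:Z + q * d%:Z - x) = r by rewrite hx /D; ring.
  have [r00|rn0] := eqVneq r 0.
    by apply/dvdzP; exists (q + q); rewrite hx r00 /D; ring.
  have [rd|rnd] := eqVneq r d%:Z.
    by apply/dvdzP; exists (q + q + 1); rewrite hx rd /D; ring.
  exfalso.
  have [rlt|rge] := ltP r d%:Z.
    by apply: (nosmall r Pr); apply/andP; split => //; lia.
  apply: (nosmall (d%:Z + d%:Z - r) (Pc _ _ Pd Pr)).
  apply/andP; split; rewrite /D in rD; lia.
exists d; split => //.
- exact: dvd_of Pn.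
- move=> k; split; first exact: dvd_of.
  by move=> /dvdzP [t ->].
Qed.


Definition phi (c : int) (q : quat R) : quat R :=
  let: (x1, x2, x3, x4) := q in
  qmk x1 x2 (cos (th c) * x3 - sin (th c) * x4) (cos (th c) * x4 + sin (th c) * x3).

Lemma phiE c k e : phi c (E k e) = E (if e then k + c else k) e.
Proof.
case: e; rewrite /phi /E /qmk /=; last by congr (_,_,_,_); ring.
rewrite thD cosD sinD; congr (_,_,_,_); ring.
Qed.

Lemma phiE0 c k : phi c (E k false) = E k false.
Proof. exact: phiE. Qed.
Lemma phiE1 c k : phi c (E k true) = E (k + c) true.
Proof. exact: phiE. Qed.

Lemma qmul1 y : qmul (qone R) y = y.
Proof. by case: y => [[[y1 y2] y3] y4]; rewrite /qmul /qone /qmk; congr (_,_,_,_); ring. Qed.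

Lemma phi_aut c : is_aut (Dic R n) (phi c).
Proof.
have back k e : phi (- c) (phi c (E k e)) = E k e.
  by rewrite !phiE; case: e => //; congr (E _ _); lia.
split.
- by move=> x /Dic_E [k [e ->]]; rewrite phiE; apply/Dic_E; eexists; eexists.
- move=> x y /Dic_E [k [e ->]] /Dic_E [l [f ->]] h.
  by rewrite -(back k e) -(back l f) h.
- move=> z /Dic_E [k [e ->]]; exists (phi (- c) (E k e)).
    by rewrite phiE; apply/Dic_E; eexists; eexists.
  by rewrite !phiE; case: e => //; congr (E _ _); lia.
- move=> x y /Dic_E [k [e ->]] /Dic_E [l [f ->]].
  case: e; case: f; rewrite ?mulE00 ?mulE01 ?mulE10 ?mulE11 ?phiE0 ?phiE1
    ?mulE00 ?mulE01 ?mulE10 ?mulE11 //; congr (E _ _); lia.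
Qed.


Lemma classify (L : set (quat R)) : reflection_system (Dic R n) L ->
  exists a b : nat, Omega_n n a b /\ rs_equiv (Dic R n) L (Lab R n a b).
Proof.
case=> LD gL cl L1.
have Lchar x : L x -> exists k e, x = E k e /\ L (E k e).
  by move=> h; have /Dic_E [k [e hx]] := LD _ h; exists k, e; rewrite -hx.
have A0 : L (E 0 false) by rewrite E0.
have [[b0 Bb0]|nB] := pselect (exists b0, L (E b0 true)); last first.
  exfalso.
  have T x : gen L x -> exists k, x = E k false.
    elim=> [y Ly| |y z _ [k ->] _ [l ->]|y _ [k ->]].
    - have [k [[] [hy Lk]]] := Lchar _ Ly; first by exfalso; apply: nB; exists k.
      by exists k.
    - by exists 0; rewrite E0.
    - by exists (k + l); rewrite mulE00.
    - by exists (- k); rewrite invE0.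
  have hj : Dic R n (qj R) by apply/Dic_E; exists 0, true; rewrite E0j.
  have [k] := T _ ((gL (qj R)).2 hj).
  by rewrite -E0j => /E_inj [].
have cA p q : L (E p false) -> L (E q false) -> L (E (p + p - q) false).
  by move=> hp hq; rewrite -circ00; apply: cl.
have cB p q : L (E p true) -> L (E q true) -> L (E (p + p - q) true).
  by move=> hp hq; rewrite -circ11; apply: cl.
have cAB p q : L (E p false) -> L (E q true) -> L (E (q + n) true).
  by move=> hp hq; rewrite -(circ01 p); apply: cl.
have cBA p q : L (E p true) -> L (E q false) -> L (E (q + n) false).
  by move=> hp hq; rewrite -(circ10 p); apply: cl.
have An : L (E n false) by have := cBA _ _ Bb0 A0; rewrite add0r.
have [a [a0 an Ach]] := structure (P := fun k => L (E k false)) A0 An cA.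
have [b [b0' bn Bch]] : exists b : nat, [/\ (0 < b)%N, (b %| n)%N &
    forall k, L (E (b0 + k) true) <-> (b%:Z %| k)%Z].
  apply: (structure (P := fun k => L (E (b0 + k) true))).
  - by rewrite addr0.
  - exact: cAB _ _ A0 Bb0.
  - move=> x y hx hy.
    rewrite (_ : b0 + (x + x - y) = (b0 + x) + (b0 + x) - (b0 + y)); [exact: cB | ring].
have Bch' k : L (E k true) <-> (b%:Z %| k - b0)%Z.
  by rewrite -(Bch (k - b0)) (addrC b0) subrK.
have an' : (a%:Z %| n%:Z)%Z by [].
have bn' : (b%:Z %| n%:Z)%Z by [].
set g := gcdn a b.
have ga : (g%:Z %| a%:Z)%Z by apply: dvdn_gcdl.
have gb : (g%:Z %| b%:Z)%Z by apply: dvdn_gcdr.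
have gn : (g%:Z %| n%:Z)%Z by apply: dvdz_trans ga an'.
have Tg x : gen L x -> exists k e, x = E k e /\ (g%:Z %| (if e then k - b0 else k))%Z.
  elim=> [y Ly| |y z _ [k [e [-> hk]]] _ [l [f [-> hl]]]|y _ [k [e [-> hk]]]].
  - have [k [e [-> Lk]]] := Lchar _ Ly; exists k, e; split => //.
    case: e Lk => [/Bch' h|/Ach h]; exact: dvdz_trans h.
  - by exists 0, false; rewrite E0 dvdz0.
  - case: e hk; case: f hl => hl hk;
      rewrite ?mulE00 ?mulE01 ?mulE10 ?mulE11; eexists; eexists; split; try reflexivity.
    + by rewrite /= (_ : k - l + n = (k - b0) - (l - b0) + n); [apply: rpredD => //; apply: rpredB | ring].
    + by rewrite /= (_ : k - l - b0 = (k - b0) - l); [rewrite rpredB | ring].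
    + by rewrite /= (_ : k + l - b0 = k + (l - b0)); [rewrite rpredD | ring].
    + by rewrite /= rpredD.
  - case: e hk => hk; rewrite ?invE0 ?invE1; eexists; eexists; split; try reflexivity.
    + by rewrite /= (_ : k + n - b0 = (k - b0) + n); [rewrite rpredD | ring].
    + by rewrite /= rpredN.
have g1 : g = 1%N.
  have hw : Dic R n (omega R n) by apply: gen_base; left.
  have [k [e [h hd]]] := Tg _ ((gL _).2 hw).
  move: h; rewrite -E1 => /E_inj [ef h2]; rewrite -ef in hd.
  have g2n : (g%:Z %| (2 * n)%N%:Z)%Z by rewrite PoszM dvdz_mull.
  have : (g%:Z %| (1 - k) + k)%Z by rewrite rpredD // (dvdz_trans g2n h2).
  rewrite subrK => h1; have : (g %| 1)%N by exact: h1.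
  by rewrite dvdn1 => /eqP.
have cab : coprime a b by rewrite /coprime -/g g1.
have Ldesc y : L y <-> exists k e, y = E k e /\
    (if e then (b%:Z %| k - b0)%Z else (a%:Z %| k)%Z).
  split.
    move=> /Lchar [k [e [-> Lk]]]; exists k, e; split => //.
    by case: e Lk => [/Bch'|/Ach].
  by move=> [k [[] [-> h]]]; [apply/Bch' | apply/Ach].
have [ab|ba] := leqP a b.
- exists a, b; split.
    by rewrite /Omega_n a0 ab an bn cab (dvdn_leq n_gt0 bn).
  exists (qone R), (phi (- b0)); split => //; first exact: phi_aut.
  left => q; rewrite (Lab_S _ an bn); split.
  + move=> [k [[] [-> hk]]].
    * exists (E (k + b0) true); first by apply/Bch'; rewrite addrK.
      by rewrite qmul1 phiE1; congr (E _ _); lia.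
    * exists (E k false); first exact/Ach.
      by rewrite qmul1 phiE0.
  + move=> [y /Ldesc [k [[] [-> hk]]] ->]; rewrite qmul1 ?phiE1 ?phiE0.
    * by exists (k + - b0), true; split.
    * by exists k, false; split.
- exists b, a; split.
    rewrite /Omega_n b0' (ltnW ba) bn an (dvdn_leq n_gt0 an) /=.
    by rewrite coprime_sym.
  have Lx : L (E b0 true) by [].
  exists (E b0 true), (phi (- b0)); split => //; first exact: phi_aut.
  left => q; rewrite (Lab_S _ bn an); split.
  + move=> [k [[] [-> hk]]].
    * exists (E (- k) false); first by apply/Ach; rewrite rpredN.
      by rewrite mulE10 phiE1; congr (E _ _); lia.
    * exists (E (b0 + n - k) true).
        apply/Bch'; rewrite (_ : b0 + n - k - b0 = n%:Z - k); [by rewrite rpredB | ring].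
      by rewrite mulE11 phiE0; congr (E _ _); lia.
  + move=> [y /Ldesc [k [[] [-> hk]]] ->].
    * rewrite mulE11 phiE0; exists (b0 - k + n), false; split => //.
      by rewrite (_ : b0 - k + n = n%:Z - (k - b0)); [rewrite rpredB | ring].
    * rewrite mulE10 phiE1; exists (b0 - k + - b0), true; split => //.
      by rewrite (_ : b0 - k + - b0 = - k); [rewrite rpredN | ring].
Qed.

End Basic.


Lemma card_neq (n : nat) a b a' b' : (0 < n)%N -> Omega_n n a b -> Omega_n n a' b' ->
  (a, b) <> (a', b') ->
  ((2 * n) %/ a + (2 * n) %/ b)%N <> ((2 * n) %/ a' + (2 * n) %/ b')%N.
Proof.
move=> n0 /andP [a0 /andP [ab /andP [bn /andP [an /andP [bn' cab]]]]].
move=> /andP [a0' /andP [ab' /andP [bn2 /andP [an2 /andP [bn2' cab']]]]] neq.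
have key x y : (0 < x)%N -> (x %| n)%N -> (y %| n)%N -> coprime x y ->
    exists N, n = (N * (x * y))%N /\ ((2 * n) %/ x + (2 * n) %/ y = 2 * N * (x + y))%N.
  move=> x0 xn yn cxy.
  have y0 : (0 < y)%N by move: yn; case: y {cxy} => //; rewrite dvd0n; lia.
  have : (x * y %| n)%N by rewrite Gauss_dvd // xn yn.
  move=> /dvdnP [N hN]; exists N; split => //.
  rewrite hN (_ : (2 * (N * (x * y)) = 2 * N * y * x)%N); last by lia.
  rewrite mulnK // (_ : (2 * N * y * x = 2 * N * x * y)%N); last by lia.
  rewrite mulnK //; lia.
have b0 : (0 < b)%N by lia.
have b0' : (0 < b')%N by lia.
have [N [hN e1]] := key _ _ a0 an bn' cab.
have [N' [hN' e2]] := key _ _ a0' an2 bn2' cab'.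
rewrite e1 e2 => E.
have E' : (N * (a + b) = N' * (a' + b'))%N by move/eqP: E; rewrite -!mulnA eqn_pmul2l // => /eqP.
have h : ((a + b) * (a' * b') = (a' + b') * (a * b))%N.
  apply/eqP; rewrite -(eqn_pmul2l n0); apply/eqP.
  have -> : (n * ((a + b) * (a' * b')) = N * (a + b) * (a * b * (a' * b')))%N.
    by rewrite {1}hN; lia.
  have -> : (n * ((a' + b') * (a * b)) = N' * (a' + b') * (a * b * (a' * b')))%N.
    by rewrite {1}hN'; lia.
  by rewrite E'.
have cop x y : coprime x y -> coprime (x * y) (x + y).
  move=> cxy; rewrite coprimeMl; apply/andP; split.
    by rewrite /coprime gcdnDl.
  by rewrite /coprime addnC gcdnDl gcdnC.
have d1 : (a * b %| a' * b')%N.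
  by rewrite -(Gauss_dvdr _ (cop _ _ cab)) h dvdn_mull.
have d2 : (a' * b' %| a * b)%N.
  by rewrite -(Gauss_dvdr _ (cop _ _ cab')) -h dvdn_mull.
have p1 : (a * b = a' * b')%N.
  apply/eqP; rewrite eqn_leq (dvdn_leq _ d1) ?(dvdn_leq _ d2) // muln_gt0 ?a0 ?a0' //.
have s1 : (a + b = a' + b')%N.
  apply/eqP; rewrite -(eqn_pmul2r (_ : 0 < a * b)%N) ?muln_gt0 ?a0 //.
  by rewrite {1}p1 h.
apply: neq; have ea : a = a' by clear -ab ab' s1 p1; nia.
by congr (_, _) => //; clear -s1 ea; lia.
Qed.


Local Close Scope ring_scope.

Theorem lemma5p2 (R : realType) (n : nat) (hn : (2 <= n)%N) :
  (forall a b : nat, Omega_n n a b ->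
     [/\ reflection_system (Dic R n) (Lab R n a b),
         (forall q, Lab R n a b q <->
            (exists m : nat, [/\ (1 <= m)%N, (m <= (2 * n) %/ a)%N &
                                 q = qexp (omega R n) (m * a)]) \/
            (exists l : nat, [/\ (1 <= l)%N, (l <= (2 * n) %/ b)%N &
                                 q = qmul (qexp (omega R n) (l * b)) (qj R)])) &
         exists s : seq (quat R),
           [/\ uniq s, (forall q, Lab R n a b q <-> q \in s) &
               size s = ((2 * n) %/ a + (2 * n) %/ b)%N]]) /\
  (forall L, reflection_system (Dic R n) L ->
     exists a b : nat, Omega_n n a b /\ rs_equiv (Dic R n) L (Lab R n a b)) /\
  (forall a b a' b' : nat, Omega_n n a b -> Omega_n n a' b' -> (a, b) <> (a', b') ->
     ((2 * n) %/ a + (2 * n) %/ b)%N <> ((2 * n) %/ a' + (2 * n) %/ b')%N).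
Proof.
have n0 : (0 < n)%N by lia.
split; [|split].
- move=> a b hab.
  move: (hab) => /andP [a0 /andP [ab /andP [bn /andP [an /andP [bn' cab]]]]].
  have b0 : (0 < b)%N by lia.
  have hq q : Lab R n a b q <->
            (exists m : nat, [/\ (1 <= m)%N, (m <= (2 * n) %/ a)%N &
                                 q = qexp (omega R n) (m * a)]) \/
            (exists l : nat, [/\ (1 <= l)%N, (l <= (2 * n) %/ b)%N &
                                 q = qmul (qexp (omega R n) (l * b)) (qj R)]).
    apply: iff_trans; first exact: (@Lab_S R n n0 a b q an bn').
    exact: (@S_RHS R n n0 a b q a0 b0 an bn').
  split.
  + exact: (@Lab_rs R n n0 a b an bn' cab).
  + exact: hq.
  + exists (sq R n a b); split.
    * exact: (@sq_uniq R n n0 a b a0 b0).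
    * move=> q; apply: iff_trans; first exact: hq.
      apply: iff_sym; exact: (@sq_mem R n n0 a b q).
    * exact: sq_size.
- move=> L hL; exact: (@classify R n n0 L hL).
- move=> a b a' b'; exact: card_neq.
Qed.
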